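(* For $i\in\{1,\dots,m\}$ let $f_i:\mathbb{R}^n\to\mathbb{R}\cup\{\infty\}$ be proper, lower semicontinuous, and prox-bounded with threshold $r_i$. Let $r>\max_i\{r_i\}$ and define $F(x,\lambda):=-\sum_{i=1}^m\lambda_ie_rf_i(x)$. Suppose $P_rf_i$ is single-valued and Lipschitz continuous for all $i$. Then, for any $(\bar x,\bar\lambda)$ and $\bar v\in\partial_xF(\bar x,\bar\lambda)$, the following hold: (1) $(0,\lambda')\in D^*(\partial_xF)(\bar x,\bar\lambda\,|\,\bar v)(0)\Rightarrow \lambda'=0$; (2) for some $\rho>0$, $(x',\lambda')\in D^*(\partial_xF)(\bar x,\bar\lambda\,|\,\bar v)(v')$ with $v'\neq 0$ implies $\langle x',v'\rangle>-\rho|v'|^2$; (3) the set-valued mapping $\partial_xF(\bar x,\cdot)$ has a continuous selection $g$ near $\bar\lambda$.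
   Context: Moreau envelope $e_rf(x)=\inf_y\{f(y)+\frac r2|y-x|^2\}$ and proximal mapping $P_rf(x)=\operatorname{argmin}_y\{f(y)+\frac r2|y-x|^2\}$. $f$ is prox-bounded if $e_rf(\bar x)>-\infty$ for some $r>0$ and $\bar x$; the infimum of such $r$ is the threshold. $\partial_x$ is the subdifferential in $x$, and $\partial_xF$ is regarded as the set-valued mapping $(x,\lambda)\mapsto\partial_xF(x,\lambda)$. For a set-valued mapping $S$ and $\bar y\in S(\bar z)$, the coderivative is $D^*S(\bar z|\bar y)(w)=\{z': (z',-w)\in N_{\operatorname{gph}S}(\bar z,\bar y)\}$, with $N$ the limiting normal cone. *)

(* Defs.v *)
(* R^n is rendered as row vectors 'rV[R]_n. *)
From HB Require Import structures.
From mathcomp Require Import all_boot all_order all_algebra.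
From mathcomp Require Import all_classical all_reals all_analysis.
Set Implicit Arguments. Unset Strict Implicit. Unset Printing Implicit Defensive.
Import Order.TTheory GRing.Theory Num.Theory.
Import numFieldNormedType.Exports.
Local Open Scope classical_set_scope.
Local Open Scope ring_scope.

Section Defs.
Variable R : realType.

Definition dotv k (u v : 'rV[R]_k) : R := \sum_(i < k) u ord0 i * v ord0 i.
Definition enorm k (u : 'rV[R]_k) : R := Num.sqrt (dotv u u).

Definition proper_fun n (f : 'rV[R]_n -> \bar R) : Prop :=
  (forall x, (-oo < f x)%E) /\ exists x, (f x < +oo)%E.

Definition moreau_obj n (f : 'rV[R]_n -> \bar R) (r : R) (x y : 'rV[R]_n) : \bar R :=
  (f y + (r / 2 * enorm (y - x) ^+ 2)%:E)%E.
Definition moreau_env n (f : 'rV[R]_n -> \bar R) (r : R) (x : 'rV[R]_n) : \bar R :=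
  ereal_inf [set moreau_obj f r x y | y in setT].

(* proximal mapping P_r f(x) = argmin_y {...}  (empty if the infimum is +oo) *)
Definition prox_map n (f : 'rV[R]_n -> \bar R) (r : R) (x : 'rV[R]_n) : set 'rV[R]_n :=
  [set y | moreau_obj f r x y = moreau_env f r x /\ (moreau_env f r x < +oo)%E].

Definition prox_ok n (f : 'rV[R]_n -> \bar R) (r : R) : Prop :=
  0 < r /\ exists x, (-oo < moreau_env f r x)%E.
Definition prox_bounded n (f : 'rV[R]_n -> \bar R) : Prop := exists r, prox_ok f r.
Definition prox_threshold n (f : 'rV[R]_n -> \bar R) : \bar R :=
  ereal_inf [set r%:E | r in prox_ok f].

Definition regular_subdiff n (g : 'rV[R]_n -> R) (x : 'rV[R]_n) : set 'rV[R]_n :=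
  [set v | forall eps : R, 0 < eps ->
     \forall y \near x, g x + dotv v (y - x) - eps * enorm (y - x) <= g y].
Definition limiting_subdiff n (g : 'rV[R]_n -> R) (x : 'rV[R]_n) : set 'rV[R]_n :=
  [set v | exists (xk vk : nat -> 'rV[R]_n),
     [/\ xk @ \oo --> x, (g \o xk) @ \oo --> g x, vk @ \oo --> v
       & forall k, regular_subdiff g (xk k) (vk k)]].

Definition regular_normal k (C : set 'rV[R]_k) (z : 'rV[R]_k) : set 'rV[R]_k :=
  [set v | C z /\ forall eps : R, 0 < eps ->
     \forall z' \near z, C z' -> dotv v (z' - z) <= eps * enorm (z' - z)].
Definition limiting_normal k (C : set 'rV[R]_k) (z : 'rV[R]_k) : set 'rV[R]_k :=
  [set v | C z /\ exists (zk vk : nat -> 'rV[R]_k),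
     [/\ zk @ \oo --> z, vk @ \oo --> v
       & forall j, regular_normal C (zk j) (vk j)]].

Definition gph a b (S : 'rV[R]_a -> set 'rV[R]_b) : set 'rV[R]_(a + b) :=
  [set w | exists (z : 'rV[R]_a) (y : 'rV[R]_b), S z y /\ w = row_mx z y].
Definition coderiv a b (S : 'rV[R]_a -> set 'rV[R]_b) (z : 'rV[R]_a) (y : 'rV[R]_b)
  (w : 'rV[R]_b) : set 'rV[R]_a :=
  [set z' | limiting_normal (gph S) (row_mx z y) (row_mx z' (- w))].

(* F(x, lambda) = - sum_i lambda_i e_r f_i(x)  (envelopes are finite under the hypotheses) *)
Definition Fsum n m (f : 'I_m -> 'rV[R]_n -> \bar R) (r : R)
  (x : 'rV[R]_n) (l : 'rV[R]_m) : R :=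
  - \sum_(i < m) l ord0 i * fine (moreau_env (f i) r x).

(* partial subdifferential in x, as a mapping (x, lambda) |-> d_x F(x, lambda);
   the pair (x, lambda) is encoded as row_mx x lambda *)
Definition subdiffx n m (f : 'I_m -> 'rV[R]_n -> \bar R) (r : R)
  (z : 'rV[R]_(n + m)) : set 'rV[R]_n :=
  limiting_subdiff (fun x => Fsum f r x (rsubmx z)) (lsubmx z).

End Defs.

(* Main.v *)
Require Import Defs.
From HB Require Import structures.
From mathcomp Require Import all_boot all_order all_algebra.
From mathcomp Require Import all_classical all_reals all_analysis.
Import Order.TTheory GRing.Theory Num.Theory.
Import numFieldNormedType.Exports.
Local Open Scope classical_set_scope.
Local Open Scope ring_scope.
From mathcomp Require Import ring lra.
Section Basic.
Variable R : realType.

Lemma entry_le k (u : 'rV[R]_k) i : `|u ord0 i| <= `|u|.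
Proof.
change (`|u ord0 i| <= mx_norm u); rewrite mx_normrE; apply/bigmax_geP; right => /=.
by exists (ord0, i).
Qed.

Lemma norm_entry k (u : 'rV[R]_k) : u = 0 \/ exists i, `|u| = `|u ord0 i|.
Proof.
have [/mx_norm_eq0 ->|u0] := eqVneq (mx_norm u) 0; first by left.
right; have [[i j] /= E] := mx_norm_neq0 u0.
by exists j; move: E; rewrite (ord1 i).
Qed.
End Basic.
Arguments entry_le {R k}.
Arguments norm_entry {R k}.
Section Dot.
Context {R : realType} {k : nat}.
Implicit Types u v w : 'rV[R]_k.

Lemma dotvC u v : dotv u v = dotv v u.
Proof. by apply: eq_bigr => i _; rewrite mulrC. Qed.

Lemma dotvDl u w v : dotv (u + w) v = dotv u v + dotv w v.
Proof. by rewrite /dotv -big_split; apply: eq_bigr => i _; rewrite mxE mulrDl. Qed.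

Lemma dotvZl a u v : dotv (a *: u) v = a * dotv u v.
Proof. by rewrite /dotv mulr_sumr; apply: eq_bigr => i _; rewrite mxE mulrA. Qed.

Lemma dotvNl u v : dotv (- u) v = - dotv u v.
Proof. by rewrite -scaleN1r dotvZl mulN1r. Qed.

Lemma dotvBl u w v : dotv (u - w) v = dotv u v - dotv w v.
Proof. by rewrite dotvDl dotvNl. Qed.

Lemma dotvDr u w v : dotv v (u + w) = dotv v u + dotv v w.
Proof. by rewrite dotvC dotvDl !(dotvC v). Qed.

Lemma dotvZr a u v : dotv v (a *: u) = a * dotv v u.
Proof. by rewrite dotvC dotvZl dotvC. Qed.

Lemma dotvNr u v : dotv v (- u) = - dotv v u.
Proof. by rewrite dotvC dotvNl dotvC. Qed.

Lemma dotvBr u w v : dotv v (u - w) = dotv v u - dotv v w.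
Proof. by rewrite dotvDr dotvNr. Qed.

Lemma dotv0l v : dotv 0 v = 0.
Proof. by rewrite /dotv big1 // => i _; rewrite mxE mul0r. Qed.

Lemma dotv_suml m (F : 'I_m -> 'rV[R]_k) v :
  dotv (\sum_(j < m) F j) v = \sum_(j < m) dotv (F j) v.
Proof.
rewrite /dotv exchange_big /=; apply: eq_bigr => i _.
by rewrite summxE mulr_suml.
Qed.

Lemma dotv_ge0 u : 0 <= dotv u u.
Proof. by apply: sumr_ge0 => i _; rewrite -expr2 sqr_ge0. Qed.

Lemma dotv_sq u : `|u| ^+ 2 <= dotv u u.
Proof.
have [->|[i ->]] := norm_entry u.
  by rewrite normr0 expr0n /= dotv_ge0.
rewrite /dotv (bigD1 i) //= -expr2 real_normK ?num_real //.
by rewrite lerDl; apply: sumr_ge0 => j _; rewrite -expr2 sqr_ge0.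
Qed.

Lemma dotv_abs u v : `|dotv u v| <= k%:R * (`|u| * `|v|).
Proof.
apply: le_trans (ler_norm_sum _ _ _) _.
rewrite mulr_natl -[X in _ *+ X]card_ord -sumr_const.
apply: ler_sum => i _; rewrite normrM.
by apply: ler_pM => //; apply: entry_le.
Qed.

Lemma enorm_sq u : enorm u ^+ 2 = dotv u u.
Proof. by rewrite /enorm sqr_sqrtr // dotv_ge0. Qed.

Lemma enorm_ge0 u : 0 <= enorm u.
Proof. exact: sqrtr_ge0. Qed.

Lemma enorm_ge u : `|u| <= enorm u.
Proof.
rewrite -(ler_pXn2r (_ : (0 < 2)%N)) ?nnegrE ?enorm_ge0 //.
by rewrite enorm_sq dotv_sq.
Qed.

Lemma enorm_le u : enorm u <= k%:R * `|u|.
Proof.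
rewrite -(ler_pXn2r (_ : (0 < 2)%N)) ?nnegrE ?mulr_ge0 ?enorm_ge0 //.
rewrite enorm_sq exprMn; apply: le_trans (ler_norm _) _; apply: le_trans (dotv_abs u u) _.
rewrite -expr2 ler_wpM2r ?exprn_ge0 //.
by rewrite -natrX ler_nat; case: k => // k'; rewrite expnS leq_pmulr.
Qed.

Lemma enorm_gt0 u : u != 0 -> 0 < enorm u.
Proof. by move=> u0; apply: lt_le_trans (enorm_ge u); rewrite normr_gt0. Qed.

End Dot.

Lemma dotv_row (R : realType) a b (u1 v1 : 'rV[R]_a) (u2 v2 : 'rV[R]_b) :
  dotv (row_mx u1 u2) (row_mx v1 v2) = dotv u1 v1 + dotv u2 v2.
Proof.
rewrite /dotv big_split_ord /=; congr (_ + _); apply: eq_bigr => i _.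
  by rewrite !row_mxEl.
by rewrite !row_mxEr.
Qed.
Section Env.
Variable R : realType.
Variable n : nat.
Variable f : 'rV[R]_n -> \bar R.
Variable r : R.
Variable p : 'rV[R]_n -> 'rV[R]_n.
Hypothesis fNy : forall x, (-oo < f x)%E.
Hypothesis hp : forall x, prox_map f r x = [set p x].

Definition ea x := fine (moreau_env f r x).

Lemma env_facts x :
  [/\ moreau_env f r x = (ea x)%:E,
      f (p x) = (ea x - r / 2 * enorm (p x - x) ^+ 2)%:E
    & forall y, ((ea x)%:E <= f y + (r / 2 * enorm (y - x) ^+ 2)%:E)%E].
Proof.
have : prox_map f r x (p x) by rewrite hp.
rewrite /prox_map /= /moreau_obj => -[E lt].
have lb : forall y, (moreau_env f r x <= f y + (r / 2 * enorm (y - x) ^+ 2)%:E)%E.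
  by move=> y; apply: ereal_inf_lbound; exists y.
have fx := fNy (p x).
rewrite /ea; move: E lt lb fx.
case: (moreau_env f r x) => [e| |] //=; last first.
  by case: (f (p x)).
case: (f (p x)) => [b| |] //= E _ lb _.
split => //; congr (_%:E); move: E => [<-]; rewrite addrK //.
Qed.

End Env.
Arguments ea {R n} f r x.
Arguments env_facts {R n f r p} fNy hp x.
Lemma dotv_sub_sq {R : realType} {k} (a d : 'rV[R]_k) :
  dotv (a - d) (a - d) = dotv a a - 2 * dotv a d + dotv d d.
Proof.
rewrite dotvBl !dotvBr (dotvC d a); ring.
Qed.

Section Quad.
Variable R : realType.
Variable n : nat.
Variable f : 'rV[R]_n -> \bar R.
Variable r : R.
Variable p : 'rV[R]_n -> 'rV[R]_n.
Hypothesis fNy : forall x, (-oo < f x)%E.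
Hypothesis hp : forall x, prox_map f r x = [set p x].
Variable L : R.
Hypothesis hL : forall x y, `|p x - p y| <= L * `|x - y|.

Lemma env_quad x d :
  `|ea f r (x + d) - ea f r x - r * dotv (x - p x) d|
    <= L * (`|r| * n%:R * `|d| ^+ 2) + `|r| * n%:R * `|d| ^+ 2.
Proof.
have [E1 F1 LB1] := env_facts fNy hp x.
have [E2 F2 LB2] := env_facts fNy hp (x + d).
have U : ea f r (x + d) <= ea f r x - r / 2 * enorm (p x - x) ^+ 2
                          + r / 2 * enorm (p x - (x + d)) ^+ 2.
  by have := LB2 (p x); rewrite F1 -EFinD lee_fin.
have Lo : ea f r x <= ea f r (x + d) - r / 2 * enorm (p (x + d) - (x + d)) ^+ 2
                          + r / 2 * enorm (p (x + d) - x) ^+ 2.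
  by have := LB1 (p (x + d)); rewrite F2 -EFinD lee_fin.
rewrite !enorm_sq in U Lo.
have e1 : p x - (x + d) = (p x - x) - d by rewrite opprD addrA.
have e3 : p (x + d) - (x + d) = (p (x + d) - x) - d by rewrite opprD addrA.
have e2 : x - p x = - (p x - x) by rewrite opprB.
rewrite e1 e3 (dotv_sub_sq (p x - x) d) (dotv_sub_sq (p (x + d) - x) d) in U Lo; rewrite e2 dotvNl.
have pp : p x - p (x + d) = (p x - x) - (p (x + d) - x).
  by rewrite opprB addrA subrK.
have h1 : `|dotv (p x - x) d - dotv (p (x + d) - x) d| <= n%:R * (L * `|d|) * `|d|.
  rewrite -dotvBl -pp; apply: le_trans (dotv_abs _ _) _.
  rewrite -mulrA ler_wpM2l // ler_wpM2r //.
  by apply: le_trans (hL _ _) _; rewrite opprD addrA subrr sub0r normrN.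
have h2 : `|dotv d d| <= n%:R * `|d| ^+ 2.
  by apply: le_trans (dotv_abs _ _) _; rewrite expr2.
set A := dotv (p x - x) (p x - x) in U Lo *.
set B := dotv (p x - x) d in U Lo h1 *.
set A' := dotv (p (x + d) - x) (p (x + d) - x) in U Lo *.
set B' := dotv (p (x + d) - x) d in U Lo h1 *.
set D := dotv d d in U Lo h2 *.
set nd := `|d| in h1 h2 *.
have h1' : `|r * (B - B')| <= L * (`|r| * n%:R * nd ^+ 2).
  rewrite normrM; apply: le_trans (ler_wpM2l _ h1) _ => //.
  by rewrite le_eqVlt; apply/orP; left; apply/eqP; ring.
have h2' : `|r * D| <= `|r| * n%:R * nd ^+ 2.
  rewrite normrM; apply: le_trans (ler_wpM2l _ h2) _ => //.
  by rewrite mulrA.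
move: h1' h2'; set M1 := L * _; set M2 := _ * n%:R * _ => h1' h2'.
have M2ge : 0 <= M2.
  by rewrite /M2; apply/mulr_ge0; [apply/mulr_ge0 => // | exact: sqr_ge0].
move: h1' h2'; rewrite !ler_norml => /andP[h1a h1b] /andP[h2a h2b].
apply/andP; split.
  have : r * (B - B') + r / 2 * D <= ea f r (x + d) - ea f r x - r * - B.
    move: Lo; rewrite mulrDr mulrBr; lra.
  lra.
have : ea f r (x + d) - ea f r x - r * - B <= r / 2 * D.
  move: U; rewrite mulrDr mulrBr; lra.
lra.
Qed.
End Quad.
Arguments env_quad {R n f r p} fNy hp {L} hL x d.
Lemma near_normP (K : realType) (V : normedModType K) (x : V) (Q : V -> Prop) :
  (\forall y \near x, Q y) <-> exists2 e : K, 0 < e & forall y, `|x - y| < e -> Q y.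
Proof.
split.
  move/nbhs_ballP => -[e e0 H]; exists e => // y hy.
  by apply: H; rewrite -ball_normE /ball_ /=.
move=> -[e e0 H]; apply/nbhs_ballP; exists e => // y.
by rewrite -ball_normE /ball_ /= => hy; apply: H.
Qed.

Lemma lip_cont (K : realType) (V W : normedModType K) (g : V -> W) (C : K) :
  (forall a b, `|g a - g b| <= C * `|a - b|) -> continuous g.
Proof.
move=> hg a; apply/cvgrPdist_lt => e e0.
apply/near_normP; exists (e / (`|C| + 1)).
  by rewrite divr_gt0 // ltr_pwDr.
move=> b hb; apply: le_lt_trans (hg a b) _.
apply: le_lt_trans (_ : `|C| * `|a - b| < e).
  by rewrite ler_wpM2r // real_ler_norm // num_real.
have h1 : 0 < `|C| + 1 by rewrite ltr_pwDr.
move: hb; rewrite ltr_pdivlMr // => hb.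
have := normr_ge0 (a - b); have := normr_ge0 C; nra.
Qed.

Lemma enormZ (R : realType) k (a : R) (u : 'rV[R]_k) : enorm (a *: u) = `|a| * enorm u.
Proof.
rewrite /enorm dotvZl dotvZr mulrA -expr2 sqrtrM ?sqr_ge0 //.
by rewrite sqrtr_sqr.
Qed.
Section RowLemmas.
Context {R : realType} {a b : nat}.

Lemma lsub_le (z : 'rV[R]_(a + b)) : `|lsubmx z| <= `|z|.
Proof.
have [->|[j ->]] := norm_entry (lsubmx z); first by rewrite normr0.
by rewrite mxE; apply: entry_le.
Qed.

Lemma rsub_le (z : 'rV[R]_(a + b)) : `|rsubmx z| <= `|z|.
Proof.
have [->|[j ->]] := norm_entry (rsubmx z); first by rewrite normr0.
by rewrite mxE; apply: entry_le.
Qed.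

Lemma lsubB (z z' : 'rV[R]_(a + b)) : lsubmx (z - z') = lsubmx z - lsubmx z'.
Proof. by apply/rowP => j; rewrite !mxE. Qed.

Lemma rsubB (z z' : 'rV[R]_(a + b)) : rsubmx (z - z') = rsubmx z - rsubmx z'.
Proof. by apply/rowP => j; rewrite !mxE. Qed.

Lemma row_le (u : 'rV[R]_a) (v : 'rV[R]_b) : `|row_mx u v| <= `|u| + `|v|.
Proof.
have [->|[j ->]] := norm_entry (row_mx u v).
  by rewrite normr0 addr_ge0.
case: (splitP j) => k hk.
  have -> : j = lshift b k by apply: val_inj.
  rewrite row_mxEl; apply: le_trans (entry_le u k) _; rewrite lerDl //.
have -> : j = rshift a k by apply: val_inj.
rewrite row_mxEr; apply: le_trans (entry_le v k) _; rewrite lerDr //.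
Qed.

Lemma rowB (u u' : 'rV[R]_a) (v v' : 'rV[R]_b) :
  row_mx u v - row_mx u' v' = row_mx (u - u') (v - v').
Proof. by rewrite opp_row_mx add_row_mx. Qed.

End RowLemmas.

Lemma aux_term {R : realType} {a a0 b bL d d' e e0 rr : R} :
  0 <= a -> a <= a0 -> 0 <= b -> b <= bL * d -> 0 <= d' -> d' <= d ->
  0 <= e -> e <= e0 -> 0 <= rr ->
  a * rr * b + d' * rr * e <= rr * (a0 * bL + e0) * d.
Proof.
move=> a0' aa0 b0 bb d0 dd e0' ee r0.
have h1 : a * b <= a0 * (bL * d) by apply: ler_pM.
have h2 : d' * e <= d * e0 by apply: ler_pM.
have -> : a * rr * b + d' * rr * e = rr * (a * b + d' * e) by ring.
have -> : rr * (a0 * bL + e0) * d = rr * (a0 * (bL * d) + d * e0) by ring.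
by rewrite ler_wpM2l // lerD.
Qed.
Section Fsec.
Variable R : realType.
Variables m n : nat.
Variable f : 'I_m -> 'rV[R]_n -> \bar R.
Variable r : R.
Variable P : 'I_m -> 'rV[R]_n -> 'rV[R]_n.
Variable Lc : 'I_m -> R.
Hypothesis fNy : forall i x, (-oo < f i x)%E.
Hypothesis hp : forall i x, prox_map (f i) r x = [set P i x].
Hypothesis hL : forall i x y, `|P i x - P i y| <= Lc i * `|x - y|.

Definition Gx (x : 'rV[R]_n) (l : 'rV[R]_m) : 'rV[R]_n :=
  \sum_(i < m) (- (l ord0 i * r)) *: (x - P i x).

Definition Kc (l : 'rV[R]_m) : R :=
  \sum_(i < m) `|l ord0 i| * ((Lc i + 1) * (`|r| * n%:R)).

Lemma F_quad x d l :
  `|Fsum f r (x + d) l - Fsum f r x l - dotv (Gx x l) d| <= Kc l * `|d| ^+ 2.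
Proof.
have -> : Fsum f r (x + d) l - Fsum f r x l - dotv (Gx x l) d =
   \sum_(i < m) (- l ord0 i) * (ea (f i) r (x + d) - ea (f i) r x
                                 - r * dotv (x - P i x) d).
  rewrite /Fsum /Gx dotv_suml.
  rewrite -!sumrN -!big_split /=; apply: eq_bigr => i _.
  rewrite dotvZl /ea; ring.
apply: le_trans (ler_norm_sum _ _ _) _.
rewrite /Kc mulr_suml; apply: ler_sum => i _.
rewrite normrM normrN -mulrA ler_wpM2l //.
apply: le_trans (env_quad (fNy i) (hp i) (hL i) x d) _.
rewrite le_eqVlt; apply/orP; left; apply/eqP; ring.
Qed.

End Fsec.
Arguments Gx {R m n} r P x l.
Arguments Kc {R m} n r Lc l.
Arguments F_quad {R m n f r P Lc} fNy hp hL x d.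
Lemma aux_uniq {R : realType} {t s nu K : R} : 0 < t -> 0 < s -> 0 <= nu -> nu <= s ->
  0 <= K -> K * t <= 1 / 2 -> t * s ^+ 2 <= s / 4 * (t * s) + K * (t * nu) ^+ 2 -> False.
Proof.
move=> t0 s0 nu0 nus K0 Kt h.
have h1 : (t * nu) ^+ 2 <= (t * s) ^+ 2.
  rewrite ler_pXn2r ?nnegrE //.
  - by rewrite ler_wpM2l // ltW.
  - by apply: mulr_ge0 => //; apply: ltW.
  - by apply: mulr_ge0 => //; apply: ltW.
have h2 : K * (t * nu) ^+ 2 <= K * (t * s) ^+ 2 by rewrite ler_wpM2l.
have h3 : K * (t * s) ^+ 2 = (K * t) * (t * s ^+ 2) by ring.
have h4 : (K * t) * (t * s ^+ 2) <= 1 / 2 * (t * s ^+ 2).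
  by apply: ler_wpM2r => //; apply: mulr_ge0; [exact: ltW | exact: sqr_ge0].
have h5 : s / 4 * (t * s) = 1 / 4 * (t * s ^+ 2) by ring.
have h6 : 0 < t * s ^+ 2 by rewrite mulr_gt0 // exprn_gt0.
lra.
Qed.

Lemma aux_quad {R : realType} {K eps nd en : R} : 0 <= K -> 0 <= nd -> nd <= en ->
  nd * (K + 1) < eps -> K * nd ^+ 2 <= eps * en.
Proof.
move=> K0 nd0 nde hd.
have e0 : 0 <= eps.
  by apply: le_trans (ltW hd); apply: mulr_ge0 => //; lra.
apply: le_trans (_ : eps * nd <= _); last by rewrite ler_wpM2l.
rewrite expr2 mulrA ler_wpM2r //; move: hd; rewrite mulrDr mulr1 mulrC; lra.
Qed.

Section Fsec2.
Variable R : realType.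
Variables m n : nat.
Variable f : 'I_m -> 'rV[R]_n -> \bar R.
Variable r : R.
Variable P : 'I_m -> 'rV[R]_n -> 'rV[R]_n.
Variable Lc : 'I_m -> R.
Hypothesis fNy : forall i x, (-oo < f i x)%E.
Hypothesis hp : forall i x, prox_map (f i) r x = [set P i x].
Hypothesis hL : forall i x y, `|P i x - P i y| <= Lc i * `|x - y|.
Hypothesis hL0 : forall i, 0 <= Lc i.

Lemma Kc_ge0 l : 0 <= Kc n r Lc l.
Proof.
apply: sumr_ge0 => i _; apply: mulr_ge0 => //; apply: mulr_ge0.
  by apply: addr_ge0.
exact: mulr_ge0.
Qed.

Lemma reg_sub_G x l : regular_subdiff (fun y => Fsum f r y l) x (Gx r P x l).
Proof.
move=> eps e0; apply/near_normP.
have K0 := Kc_ge0 l; set K := Kc n r Lc l in K0 *.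
exists (eps / (K + 1)); first by rewrite divr_gt0 // ltr_pwDr.
move=> y hy; move: y hy => /= y hy.
have {}hy : `|x - (y : 'rV[R]_n)| < eps / (K + 1) := hy.
have hq := F_quad fNy hp hL x (y - x) l.
have e : x + (y - x) = y by rewrite addrC subrK.
rewrite e -/K in hq; move: hq; rewrite ler_norml => /andP[hq _].
have hd : `|y - x| * (K + 1) < eps.
  by rewrite -ltr_pdivlMr ?ltr_pwDr // distrC.
have := aux_quad K0 (normr_ge0 (y - x)) (enorm_ge (y - x)) hd.
lra.
Qed.

Lemma reg_sub_uniq x l v :
  regular_subdiff (fun y => Fsum f r y l) x v -> v = Gx r P x l.
Proof.
move=> hv; apply/eqP; rewrite -subr_eq0; apply/negPn/negP => hu.
set u := v - Gx r P x l in hu.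
have s0 := enorm_gt0 u hu; have nu0 : 0 < `|u| by rewrite normr_gt0.
have nus := enorm_ge u.
have K0 := Kc_ge0 l; set K := Kc n r Lc l in K0.
have e40 : 0 < enorm u / 4 by rewrite divr_gt0.
have [δ δ0 H] := (near_normP _ _ _ _).1 (hv _ e40).
set t := Num.min (δ / (2 * `|u|)) (1 / (2 * (K + 1))).
have t0 : 0 < t by rewrite lt_min !divr_gt0 // ?mulr_gt0 // ltr_pwDr.
have t1 : t * `|u| < δ.
  apply: le_lt_trans (_ : δ / (2 * `|u|) * `|u| < δ).
    by rewrite ler_wpM2r // ge_min lexx.
  rewrite invfM mulrA -mulrA mulVf ?gt_eqF // mulr1.
  rewrite ltr_pdivrMr //; lra.
have t2 : K * t <= 1 / 2.
  have : t <= 1 / (2 * (K + 1)) by rewrite ge_min lexx orbT.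
  rewrite ler_pdivlMr ?mulr_gt0 ?ltr_pwDr // => ht.
  rewrite ler_pdivlMr //; nra.
have := H (x + t *: u).
rewrite opprD addrA subrr sub0r normrN normrZ gtr0_norm // => /(_ t1).
have e : x + t *: u - x = t *: u by rewrite addrC addKr.
rewrite e.
have hq := F_quad fNy hp hL x (t *: u) l.
rewrite -/K in hq; move: hq; rewrite ler_norml => /andP[_ hq] hH.
rewrite enormZ normrZ gtr0_norm // in hH hq.
have hdot : dotv v (t *: u) - dotv (Gx r P x l) (t *: u) = t * enorm u ^+ 2.
  by rewrite -dotvBl -/u dotvZr enorm_sq.
apply: (aux_uniq t0 s0 (normr_ge0 u) nus K0 t2); lra.
Qed.

Lemma G_lip l a b :
  `|Gx r P a l - Gx r P b l| <=
     (\sum_(i < m) `|l ord0 i * r| * (1 + Lc i)) * `|a - b|.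
Proof.
rewrite /Gx -sumrB mulr_suml.
apply: le_trans (ler_norm_sum _ _ _) _; apply: ler_sum => i _.
rewrite -scalerBr normrZ normrN -mulrA ler_wpM2l //.
have -> : a - P i a - (b - P i b) = (a - b) - (P i a - P i b).
  by apply/rowP => j; rewrite !mxE; ring.
apply: le_trans (ler_normB _ _) _.
by rewrite mulrDl mul1r lerD2l.
Qed.

Lemma G_cont l : continuous (fun x => Gx r P x l).
Proof. exact: lip_cont (G_lip l). Qed.

Lemma subdiffx_eq z v :
  subdiffx f r z v <-> v = Gx r P (lsubmx z) (rsubmx z).
Proof.
split.
  move=> [xk [vk [cx _ cv reg]]].
  have vkE : vk = (fun x => Gx r P x (rsubmx z)) \o xk.
    by apply: funext => k /=; apply: (reg_sub_uniq _ _ _ (reg k)).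
  have c2 : vk x @[x --> \oo] --> Gx r P (lsubmx z) (rsubmx z).
    rewrite vkE; apply: (@continuous_cvg _ _ _ _ _ xk (fun x => Gx r P x (rsubmx z)) (lsubmx z)) => //; exact: G_cont.
  exact: (cvg_unique (@norm_hausdorff R _) cv c2).
move=> ->; exists (fun=> lsubmx z), (fun=> Gx r P (lsubmx z) (rsubmx z)).
split => //; try exact: cvg_cst.
by move=> k; apply: reg_sub_G.
Qed.


Lemma h_bound i x : `|x - P i x| <= (1 + Lc i) * `|x| + `|P i 0|.
Proof.
have -> : x - P i x = x - (P i x - P i 0) - P i 0.
  by apply/rowP => j; rewrite !mxE; ring.
apply: le_trans (ler_normB _ _) _; rewrite lerD2r.
apply: le_trans (ler_normB _ _) _.
rewrite mulrDl mul1r lerD2l.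
by apply: le_trans (hL _ _ _) _; rewrite subr0.
Qed.

Definition Hm (z : 'rV[R]_(n + m)) := Gx r P (lsubmx z) (rsubmx z).

Definition CH (z0 : 'rV[R]_(n + m)) : R :=
  \sum_(i < m) `|r| * ((`|z0| + 1) * (1 + Lc i) +
                       ((1 + Lc i) * (`|z0| + 1) + `|P i 0|)).

Lemma CH_ge0 z0 : 0 <= CH z0.
Proof.
apply: sumr_ge0 => i _; apply: mulr_ge0 => //.
have h1 : 0 <= 1 + Lc i by apply: addr_ge0.
have h2 : 0 <= `|z0| + 1 by apply: addr_ge0.
by apply: addr_ge0; [apply: mulr_ge0|apply: addr_ge0 => //; apply: mulr_ge0].
Qed.

Lemma H_lip z0 z z' : `|z - z0| <= 1 -> `|z' - z0| <= 1 ->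
  `|Hm z' - Hm z| <= CH z0 * `|z' - z|.
Proof.
move=> hz hz'.
have nz : forall w : 'rV[R]_(n + m), `|w - z0| <= 1 -> `|w| <= `|z0| + 1.
  move=> w hw; have -> : w = (w - z0) + z0 by rewrite subrK.
  by apply: le_trans (ler_normD _ _) _; rewrite addrC lerD2l.
rewrite /Hm /Gx -sumrB /CH mulr_suml.
apply: le_trans (ler_norm_sum _ _ _) _; apply: ler_sum => i _.
set x := lsubmx z; set l := rsubmx z; set x' := lsubmx z'; set l' := rsubmx z'.
have -> : - (l' ord0 i * r) *: (x' - P i x') - - (l ord0 i * r) *: (x - P i x) =
   (- (l' ord0 i * r)) *: ((x' - P i x') - (x - P i x))
   + (- ((l' ord0 i - l ord0 i) * r)) *: (x - P i x).
  by apply/rowP => j; rewrite !mxE; ring.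
apply: le_trans (ler_normD _ _) _.
rewrite !normrZ !normrN !normrM.
apply: aux_term => //.
- by apply: le_trans (entry_le _ _) _; apply: le_trans (rsub_le _) _; apply: nz.
- have -> : x' - P i x' - (x - P i x) = (x' - x) - (P i x' - P i x).
    by apply/rowP => j; rewrite !mxE; ring.
  apply: le_trans (ler_normB _ _) _.
  rewrite mulrDl mul1r; apply: lerD; first by rewrite /x /x' -lsubB lsub_le.
  apply: le_trans (hL _ _ _) _; rewrite ler_wpM2l //.
  by rewrite /x /x' -lsubB lsub_le.
- have -> : l' ord0 i - l ord0 i = (l' - l) ord0 i by rewrite !mxE.
  by apply: le_trans (entry_le _ _) _; rewrite /l /l' -rsubB rsub_le.
- apply: le_trans (h_bound _ _) _; rewrite lerD2r ler_wpM2l //.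
    by apply: addr_ge0.
  by apply: le_trans (lsub_le _) _; apply: nz.
Qed.

Lemma gph_H z : gph (subdiffx f r) (row_mx z (Hm z)).
Proof. by exists z, (Hm z); split => //; apply/subdiffx_eq. Qed.

Lemma regn_bound z0 z zs w :
  `|z - z0| <= 1 / 2 ->
  regular_normal (gph (subdiffx f r)) (row_mx z (Hm z)) (row_mx zs (- w)) ->
  `|zs| <= n%:R * CH z0 * `|w|.
Proof.
move=> hz [_ hN].
set C := CH z0; have C0 : 0 <= C := CH_ge0 z0.
rewrite leNgt; apply/negP => hlt.
set A := n%:R * C * `|w| in hlt.
have A0 : 0 <= A by rewrite /A !mulr_ge0.
set K2 := ((n + m) + n)%:R * (1 + C).
have K20 : 0 <= K2 by rewrite /K2 mulr_ge0 // addr_ge0.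
set eps := (`|zs| - A) / (2 * (K2 + 1)).
have eps0 : 0 < eps.
  by rewrite /eps divr_gt0 ?subr_gt0 // mulr_gt0 // ltr_pwDr.
have [δ δ0 H] := (near_normP _ _ _ _).1 (hN _ eps0).
have zs0 : 0 < `|zs| by apply: le_lt_trans hlt.
set t := Num.min (δ / (2 * (1 + C) * `|zs|)) (1 / (2 * `|zs|)).
have C1 : 0 < 1 + C by lra.
have t0 : 0 < t by rewrite lt_min !divr_gt0 // !mulr_gt0.
have tz1 : t * `|zs| <= 1 / 2.
  have : t <= 1 / (2 * `|zs|) by rewrite ge_min lexx orbT.
  by rewrite ler_pdivlMr ?mulr_gt0 // => h; rewrite ler_pdivlMr //; lra.
have tz2 : (1 + C) * (t * `|zs|) < δ.
  have : t <= δ / (2 * (1 + C) * `|zs|) by rewrite ge_min lexx.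
  rewrite ler_pdivlMr ?mulr_gt0 // => h.
  have : (1 + C) * (t * `|zs|) <= δ / 2 by rewrite ler_pdivlMr //; lra.
  lra.
set z' := z + t *: zs.
have ezz : z' - z = t *: zs by rewrite /z' addrC addKr.
have nzz : `|z' - z| = t * `|zs| by rewrite ezz normrZ gtr0_norm.
have hz1 : `|z - z0| <= 1 by apply: le_trans hz _; lra.
have hz' : `|z' - z0| <= 1.
  have -> : z' - z0 = (z' - z) + (z - z0) by rewrite addrA subrK.
  apply: le_trans (ler_normD _ _) _; rewrite nzz; lra.
have HL := H_lip _ _ _ hz1 hz'; rewrite -/C nzz in HL.
set dH := Hm z' - Hm z in HL.
have eq1 : row_mx z' (Hm z') - row_mx z (Hm z) = row_mx (t *: zs) dH.
  by rewrite rowB ezz.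
have nq : `|row_mx (t *: zs) dH| <= (1 + C) * (t * `|zs|).
  apply: le_trans (row_le _ _) _; rewrite normrZ gtr0_norm //; lra.
have := H (row_mx z' (Hm z')).
rewrite -normrN opprB eq1 => /(_ (le_lt_trans nq tz2) (gph_H z')).
rewrite dotv_row dotvZr dotvNl => hin.
have e1 : enorm (row_mx (t *: zs) dH) <= K2 * (t * `|zs|).
  apply: le_trans (enorm_le _) _.
  by rewrite /K2 -mulrA ler_wpM2l.
have e2 : `|dotv w dH| <= n%:R * `|w| * (C * (t * `|zs|)).
  by apply: le_trans (dotv_abs _ _) _; rewrite -mulrA ler_wpM2l // ler_wpM2l.
have e3 : t * `|zs| * `|zs| <= t * dotv zs zs.
  rewrite -mulrA; apply: (ler_wpM2l (ltW t0)).
  by have := dotv_sq zs; rewrite expr2.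
have e4 : `|zs| * (t * `|zs|) <= (A + eps * K2) * (t * `|zs|).
  have e5 : eps * enorm (row_mx (t *: zs) dH) <= eps * (K2 * (t * `|zs|)).
    by apply: (ler_wpM2l (ltW eps0)).
  move: e2; rewrite ler_norml => /andP[_ e2].
  have -> : (A + eps * K2) * (t * `|zs|) = n%:R * `|w| * (C * (t * `|zs|)) + eps * (K2 * (t * `|zs|)).
    by rewrite /A; ring.
  have -> : `|zs| * (t * `|zs|) = t * `|zs| * `|zs| by ring.
  lra.
have tzs0 : 0 < t * `|zs| by rewrite mulr_gt0.
rewrite ler_pM2r // in e4.
have : eps * K2 < `|zs| - A.
  rewrite /eps mulrAC ltr_pdivrMr ?mulr_gt0 ?ltr_pwDr //.
  have g0 : 0 < `|zs| - A by rewrite subr_gt0.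
  nra.
lra.
Qed.

Lemma limn_bound z0 y0 zs w :
  limiting_normal (gph (subdiffx f r)) (row_mx z0 y0) (row_mx zs (- w)) ->
  `|zs| <= n%:R * CH z0 * `|w|.
Proof.
move=> [_ [zk [vk [czk cvk reg]]]].
have C'0 : 0 <= n%:R * CH z0 by rewrite mulr_ge0 // CH_ge0.
set C' := n%:R * CH z0 in C'0 *.
rewrite leNgt; apply/negP => hlt.
set g := `|zs| - C' * `|w|.
have g0 : 0 < g by rewrite subr_gt0.
set δ := g / (2 * (C' + 1)).
have δ0 : 0 < δ by rewrite divr_gt0 // mulr_gt0 // ltr_pwDr.
have half0 : (0 : R) < 1 / 2 by lra.
have h1 := (cvgrPdist_lt _ _).1 czk (1 / 2) half0.
have h2 := (cvgrPdist_lt _ _).1 cvk δ δ0.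
have [k [hk1 hk2]] := filter_ex (filterI (h1 eventually_filter) (h2 eventually_filter)).
have [hg _] := reg k.
move: hg => [a [y [Say eza]]].
have ya : y = Hm a by apply/subdiffx_eq.
have haz : `|a - z0| <= 1 / 2.
  apply: ltW; apply: le_lt_trans hk1.
  have e : row_mx z0 y0 - zk k = - row_mx (a - z0) (y - y0).
    by rewrite eza -rowB opprB.
  rewrite e normrN.
  by have := lsub_le (row_mx (a - z0) (y - y0)); rewrite row_mxKl.
have := reg k; rewrite eza ya -(hsubmxK (vk k)) -[rsubmx (vk k)]opprK.
move=> /(regn_bound _ _ _ _ haz); rewrite normrN -/C' => hb.
have hl : `|zs| <= `|lsubmx (vk k)| + δ.
  have -> : zs = lsubmx (vk k) + lsubmx (row_mx zs (- w) - vk k).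
    by rewrite lsubB row_mxKl addrC subrK.
  apply: le_trans (ler_normD _ _) _; rewrite lerD2l; apply: ltW.
  by apply: le_lt_trans (lsub_le _) hk2.
have hr : `|rsubmx (vk k)| <= `|w| + δ.
  have -> : rsubmx (vk k) = - w - rsubmx (row_mx zs (- w) - vk k).
    by rewrite rsubB row_mxKr opprB addrC subrK.
  apply: le_trans (ler_normB _ _) _; rewrite normrN lerD2l; apply: ltW.
  by apply: le_lt_trans (rsub_le _) hk2.
have : `|zs| <= C' * (`|w| + δ) + δ.
  apply: le_trans hl _; rewrite lerD2r; apply: le_trans hb _.
  by apply: ler_wpM2l.
have : (C' + 1) * δ = g / 2.
  have hC : C' + 1 != 0 by rewrite gt_eqF //; lra.
  rewrite /δ; field; exact: hC.
rewrite /g; nra.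
Qed.

Lemma G_lip_l xb l l' :
  `|Gx r P xb l - Gx r P xb l'| <=
     (\sum_(i < m) `|r| * `|xb - P i xb|) * `|l - l'|.
Proof.
rewrite /Gx -sumrB mulr_suml.
apply: le_trans (ler_norm_sum _ _ _) _; apply: ler_sum => i _.
rewrite -scalerBl normrZ.
have -> : - (l ord0 i * r) - - (l' ord0 i * r) = - ((l - l') ord0 i * r).
  by rewrite !mxE; ring.
rewrite normrN normrM -mulrA mulrC.
rewrite (mulrC `|(l - l') ord0 i|) !mulrA (mulrC `|r|).
by apply: ler_wpM2l; [apply: mulr_ge0 | exact: entry_le].
Qed.
End Fsec2.

Lemma aux_fin {R : realType} {nn C d x nv e : R} : 0 <= nn -> 0 <= C ->
  `|d| <= nn * (x * nv) -> x <= C * nv -> 0 <= x -> 0 <= nv -> nv <= e -> 0 < e ->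
  - (nn * C + 1) * e ^+ 2 < d.
Proof.
move=> n0 C0 hd hx x0 nv0 nve e0.
have h1 : x * nv <= C * nv * nv by apply: ler_wpM2r.
have h2 : nv * nv <= e * e by apply: ler_pM.
have h3 : C * nv * nv <= C * (e * e) by rewrite -mulrA; apply: ler_wpM2l.
have h4 : nn * (x * nv) <= nn * (C * (e * e)).
  by apply: ler_wpM2l => //; apply: le_trans h1 h3.
have h5 : 0 < e * e by apply: mulr_gt0.
move: hd; rewrite ler_norml => /andP[hd _].
have -> : - (nn * C + 1) * e ^+ 2 = - (nn * (C * (e * e))) - e * e.
  by rewrite expr2; ring.
lra.
Qed.

Theorem mainTheorem3 (R : realType) (n m : nat)
  (f : 'I_m -> 'rV[R]_n -> \bar R) (r : R) :
  (forall i, proper_fun (f i)) ->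
  (forall i, lower_semicontinuous (f i)) ->
  (forall i, prox_bounded (f i)) ->
  (forall i, (prox_threshold (f i) < r%:E)%E) ->
  (forall i, exists p : 'rV[R]_n -> 'rV[R]_n,
      (forall x, prox_map (f i) r x = [set p x]) /\ lipschitz p) ->
  forall (xb : 'rV[R]_n) (lb : 'rV[R]_m) (vb : 'rV[R]_n),
  subdiffx f r (row_mx xb lb) vb ->
  [/\ (forall l' : 'rV[R]_m,
         coderiv (subdiffx f r) (row_mx xb lb) vb 0 (row_mx 0 l') -> l' = 0),
      (exists2 rho : R, 0 < rho &
         forall (x' v' : 'rV[R]_n) (l' : 'rV[R]_m), v' != 0 ->
           coderiv (subdiffx f r) (row_mx xb lb) vb v' (row_mx x' l') ->
           - rho * enorm v' ^+ 2 < dotv x' v')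
    & exists2 U : set 'rV[R]_m, nbhs lb U &
        exists g : 'rV[R]_m -> 'rV[R]_n,
          {within U, continuous g} /\
          forall l, U l -> subdiffx f r (row_mx xb l) (g l)].
Proof.
move=> hprop _ _ _ hP xb lb vb _.
have fNy : forall i x, (-oo < f i x)%E by move=> i; case: (hprop i).
have [P hP'] := choice hP.
have hp : forall i x, prox_map (f i) r x = [set P i x] by move=> i; case: (hP' i).
have hlip : forall i, exists L : R, 0 <= L /\ forall x y, `|P i x - P i y| <= L * `|x - y|.
  move=> i; case: (hP' i) => _ [M [_ HM]].
  exists (`|M| + 1); split; first by apply: addr_ge0.
  move=> x y; have hM : M < `|M| + 1.
    by apply: le_lt_trans (real_ler_norm _) _; rewrite ?num_real // ltrDl.
  exact: (HM _ hM (x, y) (conj I I)).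
have [Lc hLc] := choice hlip.
have hL : forall i x y, `|P i x - P i y| <= Lc i * `|x - y| by move=> i; case: (hLc i).
have hL0 : forall i, 0 <= Lc i by move=> i; case: (hLc i).
have C0 := @CH_ge0 R m n r P Lc hL0 (row_mx xb lb).
set C := CH R m n r P Lc (row_mx xb lb) in C0.
have lb_ := @limn_bound R m n f r P Lc fNy hp hL hL0 (row_mx xb lb) vb.
split.
- move=> l' hc.
  have := lb_ _ _ hc; rewrite normr0 mulr0 normr_le0 => /eqP h0.
  by have := congr1 rsubmx h0; rewrite row_mxKr => ->; apply/rowP => j; rewrite !mxE.
- have C0' : 0 <= n%:R * C by apply: mulr_ge0.
  exists (n%:R * (n%:R * C) + 1); first by rewrite ltr_pwDr // mulr_ge0.
  move=> x' v' l' hv0 hc.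
  have hb := lb_ _ _ hc.
  have hx : `|x'| <= `|row_mx x' l'|.
    by have := lsub_le (row_mx x' l'); rewrite row_mxKl.
  exact: (aux_fin (ler0n _ n) C0' (dotv_abs x' v') (le_trans hx hb)
          (normr_ge0 _) (normr_ge0 _) (enorm_ge v') (enorm_gt0 v' hv0)).
- exists setT; first exact: filterT.
  exists (fun l => Gx r P xb l); split.
    apply: continuous_subspaceT.
    exact: lip_cont (@G_lip_l R m n r P xb).
  move=> l _; apply/(@subdiffx_eq R m n f r P Lc fNy hp hL hL0).
  by rewrite row_mxKl row_mxKr.
Qed.
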